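(* Let $F(p)=\frac12|p|^2$ for $p\in\mathbb{R}$ and $g(x)=-|x|$ for $x\in\mathbb{R}$. For $\varepsilon>0$ let $u^\varepsilon$ be the viscosity solution of $u^\varepsilon_t+\frac12|u^\varepsilon_x|^2=\varepsilon u^\varepsilon_{xx}$ in $\mathbb{R}\times(0,\infty)$, $u^\varepsilon(\cdot,0)=g$, and let $u$ be the viscosity solution of $u_t+\frac12|u_x|^2=0$ in $\mathbb{R}\times(0,\infty)$, $u(\cdot,0)=g$. Then there is a constant $C>0$ such that for all $\varepsilon\in(0,1)$ and $T>0$, \[ \|u^\varepsilon-u\|_{L^\infty(\mathbb{R}\times[0,T])}\le C\sqrt{T\varepsilon}, \] and this bound is sharp in the sense that for each $\varepsilon\in(0,1)$, \[ \lim_{t\to0^+}\frac{u^\varepsilon(0,t)-u(0,t)}{\sqrt{t\varepsilon}}=-\frac{2}{\sqrt{\pi}}. \] *)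

(* Defs.v *)
From Stdlib Require Import Reals Lra.
From Coquelicot Require Import Coquelicot.
Open Scope R_scope.

Definition pt (phi : R -> R -> R) (x t : R) : R := Derive (fun s => phi x s) t.
Definition px (phi : R -> R -> R) (x t : R) : R := Derive (fun y => phi y t) x.
Definition pxx (phi : R -> R -> R) (x t : R) : R :=
  Derive (fun y => Derive (fun z => phi z t) y) x.

Definition jcont (f : R -> R -> R) (x t : R) : Prop :=
  forall e, 0 < e -> exists d, 0 < d /\
    forall y s, Rabs (y - x) < d -> Rabs (s - t) < d -> Rabs (f y s - f x t) < e.

Definition test_fn (phi : R -> R -> R) : Prop :=
  forall x t,
    ex_derive (fun s => phi x s) t /\
    ex_derive (fun y => phi y t) x /\
    ex_derive (fun y => Derive (fun z => phi z t) y) x /\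
    jcont phi x t /\ jcont (pt phi) x t /\ jcont (px phi) x t /\ jcont (pxx phi) x t.

Definition cont_closed_halfplane (u : R -> R -> R) : Prop :=
  forall x t, 0 <= t -> forall e, 0 < e -> exists d, 0 < d /\
    forall y s, 0 <= s -> Rabs (y - x) < d -> Rabs (s - t) < d ->
      Rabs (u y s - u x t) < e.

Definition visc_sub (F : R -> R) (eps : R) (u : R -> R -> R) : Prop :=
  forall phi x0 t0, test_fn phi -> 0 < t0 ->
    (exists d, 0 < d /\ forall x t, 0 < t -> Rabs (x - x0) < d -> Rabs (t - t0) < d ->
        u x t - phi x t <= u x0 t0 - phi x0 t0) ->
    pt phi x0 t0 + F (px phi x0 t0) - eps * pxx phi x0 t0 <= 0.

Definition visc_super (F : R -> R) (eps : R) (u : R -> R -> R) : Prop :=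
  forall phi x0 t0, test_fn phi -> 0 < t0 ->
    (exists d, 0 < d /\ forall x t, 0 < t -> Rabs (x - x0) < d -> Rabs (t - t0) < d ->
        u x t - phi x t >= u x0 t0 - phi x0 t0) ->
    pt phi x0 t0 + F (px phi x0 t0) - eps * pxx phi x0 t0 >= 0.

(* uniqueness class: at most linear growth in x, locally uniformly in time *)
Definition linear_growth (u : R -> R -> R) : Prop :=
  forall T, 0 < T -> exists K, 0 < K /\
    forall x t, 0 <= t <= T -> Rabs (u x t) <= K * (1 + Rabs x).

Definition visc_solution (F : R -> R) (eps : R) (g : R -> R) (u : R -> R -> R) : Prop :=
  cont_closed_halfplane u /\ linear_growth u /\
  (forall x, u x 0 = g x) /\ visc_sub F eps u /\ visc_super F eps u.

Definition Fq (p : R) : R := / 2 * Rabs p ^ 2.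
Definition g0 (x : R) : R := - Rabs x.

(* Main.v *)
Require Import Defs.
From Stdlib Require Import Reals Lra.
From Coquelicot Require Import Coquelicot.
Open Scope R_scope.
Module EVT.
From mathcomp Require Import all_boot all_order all_algebra.
From mathcomp Require Import boolp classical_sets set_interval reals topology normedtype derive Rstruct_topology.
Import Order.TTheory GRing.Theory Num.Theory.
Import numFieldNormedType.Exports.
Local Open Scope classical_set_scope.

Lemma evt2 (f : R -> R -> R) (a b c d : R) : Rle a b -> Rle c d ->
 (forall x t, Rle a x /\ Rle x b -> Rle c t /\ Rle t d -> forall e, Rlt 0 e -> exists del, Rlt 0 del /\
    forall y s, Rle a y /\ Rle y b -> Rle c s /\ Rle s d -> Rlt (Rabs (Rminus y x)) del -> Rlt (Rabs (Rminus s t)) del ->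
     Rlt (Rabs (Rminus (f y s) (f x t))) e) ->
 exists x0 t0, (Rle a x0 /\ Rle x0 b) /\ (Rle c t0 /\ Rle t0 d) /\
   forall x t, Rle a x /\ Rle x b -> Rle c t /\ Rle t d -> Rle (f x0 t0) (f x t).
Proof.
move=> ab cd hc.
pose A : set (R * R)%type := (`[a, b]%classic `*` `[c, d]%classic).
have A0 : A !=set0.
  by exists (a, c); split; rewrite /= in_itv /=; apply/andP; split; apply/RleP; lra.
have cA : compact A by apply: compact_setX; apply: segment_compact.
have cf : {within A, continuous (fun p => f p.1 p.2)}.
  apply/subspace_continuousP => -[x t] [/= xab tcd].
  apply/(@cvgrPdist_lt _ R^o) => e /RltP e0.
  move: xab tcd; rewrite !in_itv /= => /andP[/RleP ax /RleP xb] /andP[/RleP ct /RleP td].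
  have [del [del0 H]] := hc x t (conj ax xb) (conj ct td) e e0.
  rewrite /within /=; apply/nbhs_ballP; exists del => /=; first by apply/RltP.
  move=> [y s] [/= bxy bts] [/= yab scd].
  move: yab scd; rewrite !in_itv /= => /andP[/RleP ay /RleP yb] /andP[/RleP cs /RleP sd].
  rewrite distrC; apply/RltP; rewrite -RminusE -RabsE; apply: H => //.
  - move: bxy; rewrite /ball /= => /RltP; rewrite -RminusE -RabsE Rabs_minus_sym; done.
  - move: bts; rewrite /ball /= => /RltP; rewrite -RminusE -RabsE Rabs_minus_sym; done.
have [[x0 t0] /set_mem [/= H1 H2] Hmin] := compact_EVT_min A0 cA cf.
move: H1 H2; rewrite !in_itv /= => /andP[/RleP ? /RleP ?] /andP[/RleP ? /RleP ?].
exists x0, t0; split; [lra|split; [lra|]].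
move=> x t hx ht; apply/RleP; apply: (Hmin (x, t)); apply/mem_set; split; rewrite /= in_itv /=;
  apply/andP; split; apply/RleP; lra.
Qed.
End EVT.
Lemma exd_cont (f : R -> R) x : ex_derive f x -> continuous f x.
Proof. intros H. apply (@ex_derive_continuous R_AbsRing R_NormedModule f x H). Qed.

Lemma isd_cpt (f : R -> R) x d : is_derive f x d -> continuity_pt f x.
Proof. intros H. apply continuity_pt_filterlim, exd_cont. eexists; eauto. Qed.

Lemma cont_cpt (f : R -> R) x : continuous f x -> continuity_pt f x.
Proof. intros H; apply continuity_pt_filterlim, H. Qed.

Definition smooth (phi Dt Dx Dxx : R -> R -> R) : Prop :=
  forall x t, is_derive (fun s => phi x s) t (Dt x t) /\
              is_derive (fun y => phi y t) x (Dx x t) /\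
              is_derive (fun y => Dx y t) x (Dxx x t) /\
              continuity_2d_pt phi x t /\ continuity_2d_pt Dt x t /\
              continuity_2d_pt Dx x t /\ continuity_2d_pt Dxx x t.

Lemma c2d_jcont f x t : continuity_2d_pt f x t -> jcont f x t.
Proof.
  intros H e He. destruct (H (mkposreal e He)) as [d Hd].
  exists d; split; [apply cond_pos|]. intros y s Hy Hs. apply (Hd y s Hy Hs).
Qed.

Lemma smooth_test phi Dt Dx Dxx : smooth phi Dt Dx Dxx ->
  test_fn phi /\ forall x t, pt phi x t = Dt x t /\ px phi x t = Dx x t /\ pxx phi x t = Dxx x t.
Proof.
  intros H.
  assert (E : forall x t, pt phi x t = Dt x t /\ px phi x t = Dx x t /\ pxx phi x t = Dxx x t).
  { intros x t. destruct (H x t) as (H1 & H2 & H3 & _).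
    unfold pt, px, pxx. split; [|split].
    - apply is_derive_unique; auto.
    - apply is_derive_unique; auto.
    - rewrite (Derive_ext _ (fun y => Dx y t)).
      apply is_derive_unique; auto.
      intros y. apply is_derive_unique. apply (proj1 (proj2 (H y t))). }
  split; auto.
  intros x t. destruct (H x t) as (H1 & H2 & H3 & H4 & H5 & H6 & H7).
  split; [eexists; eauto|]. split; [eexists; eauto|].
  split.
  { apply (ex_derive_ext (fun y => Dx y t)); [|eexists; eauto].
    intros y. symmetry. apply is_derive_unique. apply (proj1 (proj2 (H y t))). }
  split; [apply c2d_jcont; auto|].
  split; [apply c2d_jcont; eapply continuity_2d_pt_ext; [|apply H5]; intros; symmetry; apply E|].
  split; [apply c2d_jcont; eapply continuity_2d_pt_ext; [|apply H6]; intros; symmetry; apply E|].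
  apply c2d_jcont; eapply continuity_2d_pt_ext; [|apply H7]; intros; symmetry; apply E.
Qed.

Lemma isd_plus (f g : R -> R) (x df dg : R) : is_derive f x df -> is_derive g x dg ->
  is_derive (fun y => f y + g y) x (df + dg).
Proof. intros H1 H2. apply (@is_derive_plus R_AbsRing R_NormedModule f g x df dg H1 H2). Qed.

Lemma isd_mult (f g : R -> R) (x df dg : R) : is_derive f x df -> is_derive g x dg ->
  is_derive (fun y => f y * g y) x (df * g x + f x * dg).
Proof. intros H1 H2. apply (@is_derive_mult R_AbsRing f g x df dg H1 H2). intros; apply Rmult_comm. Qed.

Lemma isd_comp (f g : R -> R) (x df dg : R) : is_derive f (g x) df -> is_derive g x dg ->
  is_derive (fun y => f (g y)) x (df * dg).
Proof. intros H1 H2. rewrite Rmult_comm. apply (@is_derive_comp R_AbsRing R_NormedModule f g x df dg H1 H2). Qed.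

Lemma isd_ext (f g : R -> R) (x d d' : R) : (forall y, f y = g y) -> d = d' -> is_derive f x d -> is_derive g x d'.
Proof. intros H E H1. subst d'. apply (is_derive_ext f g x d H H1). Qed.

Lemma isd_const (c x : R) : is_derive (fun _ => c) x 0.
Proof. apply (@is_derive_const R_AbsRing R_NormedModule). Qed.

Lemma isd_id (x : R) : is_derive (fun y => y) x 1.
Proof. apply (@is_derive_id R_AbsRing). Qed.

Lemma isd_scal (f : R -> R) (a x d : R) : is_derive f x d -> is_derive (fun y => a * f y) x (a * d).
Proof. intros H. apply is_derive_scal; auto. Qed.

Lemma c2d_t (f : R -> R) x t : continuity_pt f t -> continuity_2d_pt (fun _ s => f s) x t.
Proof. intros H. apply (continuity_1d_2d_pt_comp f (fun _ s => s)); auto. apply continuity_2d_pt_id2. Qed.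

Lemma c2d_x (f : R -> R) x t : continuity_pt f x -> continuity_2d_pt (fun y _ => f y) x t.
Proof. intros H. apply (continuity_1d_2d_pt_comp f (fun y _ => y)); auto. apply continuity_2d_pt_id1. Qed.

Lemma smooth_sep (p p' q q' q'' r r' : R -> R) :
  (forall t, is_derive p t (p' t)) -> (forall t, is_derive r t (r' t)) ->
  (forall x, is_derive q x (q' x)) -> (forall x, is_derive q' x (q'' x)) ->
  (forall t, continuous p' t) -> (forall t, continuous r' t) -> (forall x, continuous q'' x) ->
  smooth (fun x t => p t * q x + r t) (fun x t => p' t * q x + r' t)
         (fun x t => p t * q' x) (fun x t => p t * q'' x).
Proof.
  intros Hp Hr Hq Hq' Cp Cr Cq x t.
  split; [|split; [|split; [|split; [|split; [|split]]]]].
  - eapply isd_ext; [intros; reflexivity| |].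
    2:{ apply isd_plus; [apply isd_mult; [apply Hp|apply isd_const]|apply Hr]. }
    cbv beta; ring.
  - eapply isd_ext; [intros; reflexivity| |].
    2:{ apply isd_plus; [apply isd_mult; [apply isd_const|apply Hq]|apply isd_const]. }
    cbv beta; ring.
  - eapply isd_ext; [intros; reflexivity| |].
    2:{ apply isd_mult; [apply isd_const|apply Hq']. }
    cbv beta; ring.
  - apply continuity_2d_pt_plus. apply continuity_2d_pt_mult.
    apply c2d_t; eapply isd_cpt; eauto. apply c2d_x; eapply isd_cpt; eauto.
    apply c2d_t; eapply isd_cpt; eauto.
  - apply continuity_2d_pt_plus. apply continuity_2d_pt_mult.
    apply c2d_t; apply cont_cpt; auto. apply c2d_x; eapply isd_cpt; eauto.
    apply c2d_t; apply cont_cpt; auto.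
  - apply continuity_2d_pt_mult.
    apply c2d_t; eapply isd_cpt; eauto. apply c2d_x; eapply isd_cpt; eauto.
  - apply continuity_2d_pt_mult.
    apply c2d_t; eapply isd_cpt; eauto. apply c2d_x; apply cont_cpt; auto.
Qed.

Lemma smooth_lin a b f Dtf Dxf Dxxf g Dtg Dxg Dxxg :
  smooth f Dtf Dxf Dxxf -> smooth g Dtg Dxg Dxxg ->
  smooth (fun x t => a * f x t + b * g x t) (fun x t => a * Dtf x t + b * Dtg x t)
         (fun x t => a * Dxf x t + b * Dxg x t) (fun x t => a * Dxxf x t + b * Dxxg x t).
Proof.
  intros Hf Hg x t.
  destruct (Hf x t) as (F1 & F2 & F3 & F4 & F5 & F6 & F7).
  destruct (Hg x t) as (G1 & G2 & G3 & G4 & G5 & G6 & G7).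
  split; [|split; [|split; [|split; [|split; [|split]]]]].
  - apply isd_plus; apply isd_scal; auto.
  - apply isd_plus; apply isd_scal; auto.
  - apply isd_plus; apply isd_scal; auto.
  - apply continuity_2d_pt_plus; apply continuity_2d_pt_mult; auto; apply continuity_2d_pt_const.
  - apply continuity_2d_pt_plus; apply continuity_2d_pt_mult; auto; apply continuity_2d_pt_const.
  - apply continuity_2d_pt_plus; apply continuity_2d_pt_mult; auto; apply continuity_2d_pt_const.
  - apply continuity_2d_pt_plus; apply continuity_2d_pt_mult; auto; apply continuity_2d_pt_const.
Qed.

Lemma smooth_cont phi Dt Dx Dxx : smooth phi Dt Dx Dxx -> forall x t, continuity_2d_pt phi x t.
Proof. intros H x t; apply H. Qed.
Lemma exRInt_cont (f : R -> R) a b : (forall z, Rmin a b <= z <= Rmax a b -> continuous f z) -> ex_RInt f a b.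
Proof. intros H. apply (@ex_RInt_continuous R_CompleteNormedModule); auto. Qed.

Lemma RInt_mult_l (f : R -> R) k a b : ex_RInt f a b -> RInt (fun t => k * f t) a b = k * RInt f a b.
Proof. intros H. apply (@RInt_scal R_CompleteNormedModule f a b k H). Qed.









Definition gf (s : R) : R := exp (- (s * s)).
Definition gE (y : R) : R := RInt gf 0 y.

Lemma gf_cont : forall z, continuous gf z.
Proof. intros z; apply exd_cont; unfold gf; auto_derive; auto. Qed.

Lemma gf_ex_RInt : forall a b, ex_RInt gf a b.
Proof. intros; apply exRInt_cont; intros; apply gf_cont. Qed.

Lemma gE_deriv : forall y : R, is_derive gE y (gf y).
Proof.
  intros y. apply (@is_derive_RInt R_CompleteNormedModule gf gE 0 y).
  - apply filter_forall; intros b; apply (@RInt_correct R_CompleteNormedModule), gf_ex_RInt.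
  - apply gf_cont.
Qed.

Definition Jf (y t : R) : R := exp (- (y * y) * (1 + t * t)) / (1 + t * t).
Definition J (y : R) : R := RInt (fun t => Jf y t) 0 1.

Lemma tpos : forall t, 0 < 1 + t * t.
Proof. intros; nra. Qed.

Lemma Jf_dy : forall y t, is_derive (fun u => Jf u t) y (-2 * y * exp (- (y * y) * (1 + t * t))).
Proof.
  intros y t. unfold Jf. auto_derive.
  - pose proof (tpos t); lra.
  - field. pose proof (tpos t); lra.
Qed.

Lemma c2d_Jd : forall y t, continuity_2d_pt (fun u v => -2 * u * exp (- (u * u) * (1 + v * v))) y t.
Proof.
  intros y t.
  apply continuity_2d_pt_mult.
  - apply continuity_2d_pt_mult. apply continuity_2d_pt_const. apply continuity_2d_pt_id1.
  - apply (continuity_1d_2d_pt_comp exp (fun u v => - (u * u) * (1 + v * v))).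
    + apply derivable_continuous_pt, derivable_pt_exp.
    + apply continuity_2d_pt_mult.
      * apply continuity_2d_pt_opp, continuity_2d_pt_mult; apply continuity_2d_pt_id1.
      * apply continuity_2d_pt_plus. apply continuity_2d_pt_const.
        apply continuity_2d_pt_mult; apply continuity_2d_pt_id2.
Qed.

Lemma J_deriv : forall y : R, is_derive J y (-2 * gf y * gE y).
Proof.
  intros y.
  assert (H := is_derive_RInt_param Jf 0 1 y).
  unfold J.
  replace (-2 * gf y * gE y) with (RInt (fun t => Derive (fun u => Jf u t) y) 0 1).
  apply H.
  - apply filter_forall; intros x0 t _. eexists; apply Jf_dy.
  - intros t _. eapply continuity_2d_pt_ext; [|apply (c2d_Jd y t)].
    intros u v; simpl. symmetry; apply is_derive_unique, Jf_dy.
  - apply filter_forall; intros x0. apply exRInt_cont; intros z _.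
    apply exd_cont; unfold Jf; auto_derive. pose proof (tpos z); lra.
  - rewrite (RInt_ext _ (fun t => (-2 * y * gf y) * gf (y * t))).
    + assert (Hex : ex_RInt (fun t => gf (y * t)) 0 1).
      { apply exRInt_cont; intros z _. apply exd_cont; unfold gf; auto_derive; auto. }
      rewrite RInt_mult_l by exact Hex.
      assert (HH := RInt_comp_lin gf y 0 0 1).
      replace (y * 0 + 0) with 0 in HH by ring.
      replace (y * 1 + 0) with y in HH by ring.
      assert (HH2 : RInt (fun t => gf (y * t)) 0 1 * y = gE y).
      { unfold gE. rewrite <- HH by apply gf_ex_RInt.
        rewrite Rmult_comm, <- RInt_mult_l by exact Hex.
        apply RInt_ext; intros; unfold scal; simpl; unfold mult; simpl.
        f_equal; f_equal; ring. }
      rewrite <- HH2. match goal with |- ?a = ?b => change (@eq R a b) end; ring.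
    + intros t _. erewrite is_derive_unique; [|apply Jf_dy].
      unfold gf. rewrite (Rmult_assoc (-2 * y)), <- exp_plus. f_equal. f_equal. ring.
Qed.

Lemma K_const : forall y, gE y * gE y + J y = PI / 4.
Proof.
  intros y.
  assert (HK : forall z, is_derive (fun z => gE z * gE z + J z) z 0).
  { intros z. eapply isd_ext; [intros; reflexivity| |].
    2:{ apply isd_plus. apply isd_mult; apply gE_deriv. apply J_deriv. }
    ring. }
  assert (HE0 : gE 0 = 0) by (unfold gE; apply (@RInt_point R_CompleteNormedModule)).
  assert (HJ0 : J 0 = PI / 4).
  { unfold J, Jf.
    rewrite (RInt_ext _ (fun t => / (1 + t ^ 2))).
    2:{ intros t _. replace (- (0 * 0) * (1 + t * t)) with 0 by ring. rewrite exp_0. simpl. field.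
        pose proof (tpos t). lra. }
    rewrite <- atan_1.
    replace (atan 1) with (minus (atan 1) (atan 0)).
    2:{ rewrite atan_0. unfold minus, plus, opp; simpl. ring. }
    apply is_RInt_unique. apply (@is_RInt_derive R_CompleteNormedModule).
    - intros x _. apply is_derive_Reals, derivable_pt_lim_atan.
    - intros x _. apply exd_cont. auto_derive. nra. }
  assert (H0 : gE 0 * gE 0 + J 0 = PI / 4) by (rewrite HE0, HJ0; ring).
  rewrite <- H0.
  destruct (MVT_gen (fun z => gE z * gE z + J z) 0 y (fun _ => 0)) as [c [_ Hc]].
  - intros x _; apply HK.
  - intros x _. apply continuity_pt_filterlim. apply (exd_cont (fun z => gE z * gE z + J z)). eexists; apply HK.
  - lra.
Qed.




Lemma Fq_eq p : Fq p = p * p / 2.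
Proof. unfold Fq. rewrite pow2_abs. simpl. field. Qed.

Lemma abs_sq x : Rabs x * Rabs x = x * x.
Proof. rewrite <- Rabs_mult; apply Rabs_pos_eq; nra. Qed.

Lemma quad_lb (a K x : R) : 0 < a -> 0 <= K -> a * (x * x) - K * Rabs x >= - (K * K / (4 * a)).
Proof.
  intros Ha HK.
  pose proof (abs_sq x) as H.
  assert (E: a * (x * x) - K * Rabs x + K * K / (4 * a) = a * ((Rabs x - K / (2 * a)) * (Rabs x - K / (2 * a)))).
  { rewrite <- H. field. lra. }
  assert (0 <= a * ((Rabs x - K / (2 * a)) * (Rabs x - K / (2 * a)))).
  { apply Rmult_le_pos; [lra|]. apply Rle_0_sqr. }
  lra.
Qed.

Lemma exp_le_exp x y : x <= y -> exp x <= exp y.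
Proof. intros H. destruct (Rle_lt_or_eq_dec _ _ H) as [H1|H1]. left; apply exp_increasing; auto. subst; lra. Qed.

Lemma abs_lb a b : Rabs a <= b -> - b <= a.
Proof. intros H. pose proof (Rle_abs (-a)). rewrite Rabs_Ropp in H0. lra. Qed.

Lemma cont_Phi (U phi : R -> R -> R) x t : cont_closed_halfplane U -> continuity_2d_pt phi x t -> 0 <= t ->
  forall e, 0 < e -> exists del, 0 < del /\ forall y s, 0 <= s -> Rabs (y - x) < del -> Rabs (s - t) < del ->
    Rabs ((U y s - phi y s) - (U x t - phi x t)) < e.
Proof.
  intros Uc Pc Ht e He.
  destruct (Uc x t Ht (e/2) ltac:(lra)) as [d1 [Hd1 H1]].
  destruct (Pc (mkposreal (e/2) ltac:(lra))) as [d2 H2].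
  exists (Rmin d1 d2). split. apply Rmin_pos; [lra|apply cond_pos].
  intros y s Hs Hy Hs'.
  assert (A1 := H1 y s Hs (Rlt_le_trans _ _ _ Hy (Rmin_l _ _)) (Rlt_le_trans _ _ _ Hs' (Rmin_l _ _))).
  assert (A2 := H2 y s (Rlt_le_trans _ _ _ Hy (Rmin_r _ _)) (Rlt_le_trans _ _ _ Hs' (Rmin_r _ _))).
  simpl in A2.
  replace ((U y s - phi y s) - (U x t - phi x t)) with ((U y s - U x t) - (phi y s - phi x t)) by ring.
  eapply Rle_lt_trans. apply Rabs_triang. rewrite Rabs_Ropp. lra.
Qed.

Lemma min_strip (Phi : R -> R -> R) (R0 T2 x1 t1 : R) :
  0 <= R0 -> 0 < T2 -> Rabs x1 <= R0 -> 0 <= t1 <= T2 ->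
  (forall x t, 0 <= t -> forall e, 0 < e -> exists del, 0 < del /\ forall y s, 0 <= s -> Rabs (y - x) < del -> Rabs (s - t) < del ->
    Rabs (Phi y s - Phi x t) < e) ->
  (forall x t, 0 <= t <= T2 -> R0 <= Rabs x -> Phi x t >= 0) ->
  Phi x1 t1 < 0 ->
  exists x0 t0, 0 <= t0 <= T2 /\ Phi x0 t0 <= Phi x1 t1 /\
    forall x t, 0 <= t <= T2 -> Phi x0 t0 <= Phi x t.
Proof.
  intros HR0 HT2 Hx1 Ht1 Hc Hout Hneg.
  destruct (EVT.evt2 Phi (-R0) R0 0 T2) as [x0 [t0 [Hx0 [Ht0 Hm]]]]; try lra.
  { intros x t Hx Ht e He. destruct (Hc x t (proj1 Ht) e He) as [d [Hd H]].
    exists d; split; auto. intros y s Hy Hs. apply H. lra. }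
  assert (Hm1 : Phi x0 t0 <= Phi x1 t1).
  { apply Hm; auto. apply Rabs_le_between; auto. }
  exists x0, t0. split; auto. split; auto.
  intros x t Ht. destruct (Rle_or_lt (Rabs x) R0) as [Hx|Hx].
  - apply Hm; auto. apply Rabs_le_between; auto.
  - specialize (Hout x t Ht (Rlt_le _ _ Hx)). lra.
Qed.

Lemma cmp_sub (eps : R) (U v Dt Dx Dxx : R -> R -> R) :
  0 <= eps -> cont_closed_halfplane U -> linear_growth U -> visc_super Fq eps U ->
  smooth v Dt Dx Dxx ->
  (forall x t, 0 < t -> Dt x t + Fq (Dx x t) - eps * Dxx x t <= 0) ->
  (forall T, 0 < T -> exists K, forall x t, 0 <= t <= T -> v x t <= K * (1 + Rabs x)) ->
  (forall x, v x 0 <= U x 0) ->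
  forall x t, 0 <= t -> v x t <= U x t.
Proof.
  intros Heps Uc Ug Us Sv Veq Vg V0 x1 t1 Ht1.
  destruct (Rle_lt_or_eq_dec 0 t1 Ht1) as [Ht1p|Ht1z]; [|subst t1; apply V0].
  destruct (Rle_or_lt (v x1 t1) (U x1 t1)) as [|Hcon]; [auto|exfalso].
  set (th := v x1 t1 - U x1 t1).
  assert (Hth : 0 < th) by (unfold th; lra).
  set (T2 := t1 + 1).
  assert (HT2 : 0 < T2) by (unfold T2; lra).
  destruct (Ug T2 HT2) as [KU [HKU HU]].
  destruct (Vg T2 HT2) as [Kv HV].
  set (K := KU + Rabs Kv).
  assert (HK : 0 < K) by (unfold K; pose proof (Rabs_pos Kv); lra).
  assert (HUl : forall x t, 0 <= t <= T2 -> - (K * (1 + Rabs x)) <= U x t).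
  { intros x t Ht. specialize (HU x t Ht). apply abs_lb in HU.
    pose proof (Rabs_pos x); pose proof (Rabs_pos Kv). unfold K. nra. }
  assert (HVu : forall x t, 0 <= t <= T2 -> v x t <= K * (1 + Rabs x)).
  { intros x t Ht. specialize (HV x t Ht).
    pose proof (Rabs_pos x); pose proof (Rle_abs Kv). unfold K. nra. }
  set (q := exp (- T2) / 2).
  assert (Hq : 0 < q) by (unfold q; pose proof (exp_pos (-T2)); lra).
  set (psi := fun x t => - (exp (t - T2) / 2) * (x * x) + (- (1 + eps) * t)).
  set (C0 := K + K * K / (4 * q)).
  assert (HC0 : 0 < C0).
  { unfold C0. assert (0 <= K * K / (4 * q)) by (apply Rle_mult_inv_pos; nra). lra. }
  set (A1 := v x1 t1 - psi x1 t1).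
  set (g := Rmin (1/2) (th / (4 * (C0 + Rabs A1 + 1)))).
  assert (HD : 0 < 4 * (C0 + Rabs A1 + 1)) by (pose proof (Rabs_pos A1); lra).
  assert (Hg : 0 < g <= 1/2).
  { split. apply Rmin_pos; [lra|]. apply Rdiv_lt_0_compat; lra. apply Rmin_l. }
  assert (HgA : g * (C0 + Rabs A1 + 1) <= th / 4).
  { assert (g <= th / (4 * (C0 + Rabs A1 + 1))) by apply Rmin_r.
    pose proof (Rabs_pos A1).
    apply Rmult_le_compat_r with (r := C0 + Rabs A1 + 1) in H; [|lra].
    replace (th / (4 * (C0 + Rabs A1 + 1)) * (C0 + Rabs A1 + 1)) with (th / 4) in H by (field; lra).
    lra. }
  set (mu := 1 - g).
  set (be := th / 4).
  assert (Hbe : 0 < be) by (unfold be; lra).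
  set (C1 := 2 * K + K * K / (g * q)).
  assert (HC1 : 0 < C1).
  { unfold C1. assert (0 <= K * K / (g * q)) by (apply Rle_mult_inv_pos; nra). lra. }
  set (la := C1 / be).
  assert (Hla : 0 < la) by (unfold la; apply Rdiv_lt_0_compat; lra).
  set (f := fun t => be * exp (la * (t - t1))).
  assert (Hf0 : forall t, 0 < f t) by (intros; unfold f; pose proof (exp_pos (la * (t - t1))); nra).
  set (w := fun x t => - (g * exp (t - T2) / 2) * (x * x) + (- (g * (1 + eps)) * t - f t)).
  assert (Sw : smooth w (fun x t => - (g * exp (t - T2) / 2) * (x * x) + (- (g * (1 + eps)) - be * (la * exp (la * (t - t1)))))
                        (fun x t => - (g * exp (t - T2) / 2) * (2 * x)) (fun x t => - (g * exp (t - T2) / 2) * 2)).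
  { apply (smooth_sep (fun t => - (g * exp (t - T2) / 2)) (fun t => - (g * exp (t - T2) / 2))
             (fun x => x * x) (fun x => 2 * x) (fun _ => 2)
             (fun t => - (g * (1 + eps)) * t - f t) (fun t => - (g * (1 + eps)) - be * (la * exp (la * (t - t1))))).
    - intros t. auto_derive; auto. unfold Rminus, Rdiv; ring.
    - intros t. unfold f. auto_derive; auto. unfold Rminus, Rdiv; ring.
    - intros x. auto_derive; auto. ring.
    - intros x. auto_derive; auto. ring.
    - intros t. apply exd_cont. auto_derive; auto.
    - intros t. apply exd_cont. auto_derive; auto.
    - intros x. apply exd_cont. auto_derive; auto. }
  set (phi := fun x t => mu * v x t + 1 * w x t).
  assert (Sphi := smooth_lin mu 1 _ _ _ _ _ _ _ _ Sv Sw).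
  fold phi in Sphi.
  destruct (smooth_test _ _ _ _ Sphi) as [Tphi Ephi].
  set (Phi := fun x t => U x t - phi x t).
  assert (B1 : forall x t, 0 <= t <= T2 -> Phi x t >= - (2 * K * (1 + Rabs x)) + g * q * (x * x) + f t).
  { intros x t Ht. unfold Phi, phi, w.
    specialize (HUl x t Ht). specialize (HVu x t Ht).
    assert (Hk : exp (- T2) <= exp (t - T2)) by (apply exp_le_exp; lra).
    assert (Hm : mu * v x t <= K * (1 + Rabs x)).
    { pose proof (Rabs_pos x). assert (0 <= K * (1 + Rabs x)) by nra. unfold mu.
      destruct (Rle_or_lt 0 (v x t)); nra. }
    assert (g * q * (x * x) <= g * exp (t - T2) / 2 * (x * x)).
    { unfold q. assert (0 <= x * x) by nra.
      assert (0 <= g * (x * x) * (exp (t - T2) - exp (- T2))) by (apply Rmult_le_pos; [apply Rmult_le_pos|]; lra).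
      nra. }
    assert (0 <= g * (1 + eps) * t) by (apply Rmult_le_pos; nra).
    lra. }
  assert (B3 : forall x, Phi x 0 >= - (th / 4)).
  { intros x. unfold Phi, phi, w.
    specialize (HUl x 0 ltac:(lra)). specialize (V0 x).
    replace (0 - T2) with (- T2) by ring. fold q.
    pose proof (quad_lb q K x Hq (Rlt_le _ _ HK)).
    pose proof (Hf0 0).
    assert (g * (q * (x * x) - K * Rabs x - K) >= - (g * C0)).
    { unfold C0. nra. }
    assert (g * C0 <= th / 4) by (pose proof (Rabs_pos A1); nra).
    replace (exp (- T2)) with (2 * q) by (unfold q; field).
    unfold mu. nra. }
  assert (B4 : Phi x1 t1 <= - (th / 2)).
  { unfold Phi, phi, w.
    assert (Hf1 : f t1 = be) by (unfold f; replace (la * (t1 - t1)) with 0 by ring; rewrite exp_0; ring).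
    rewrite Hf1.
    assert (g * A1 <= th / 4).
    { pose proof (Rle_abs A1). pose proof (Rabs_pos A1). nra. }
    unfold A1, psi in H. unfold mu, be. fold th. unfold th in *. nra. }
  assert (B5 : forall x, Phi x T2 > 0).
  { intros x. specialize (B1 x T2 ltac:(lra)).
    assert (HfT : f T2 > C1).
    { unfold f. replace (T2 - t1) with 1 by (unfold T2; ring).
      pose proof (exp_ineq1_le (la * 1)).
      unfold la in *. replace (C1 / be * 1) with (C1 / be) in * by ring.
      assert (be * (1 + C1 / be) = be + C1) by (field; lra). nra. }
    pose proof (quad_lb (g * q) (2 * K) x ltac:(nra) ltac:(lra)).
    assert (2 * K * (2 * K) / (4 * (g * q)) = K * K / (g * q)) by (field; nra).
    unfold C1 in HfT. lra. }
  set (R0 := Rabs x1 + 1 + 4 * K / (g * q)).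
  assert (HR0 : 0 <= 4 * K / (g * q)) by (apply Rle_mult_inv_pos; nra).
  assert (B2 : forall x t, 0 <= t <= T2 -> R0 <= Rabs x -> Phi x t >= 0).
  { intros x t Ht Hx. specialize (B1 x t Ht). pose proof (Hf0 t).
    assert (H1 : 1 <= Rabs x) by (unfold R0 in Hx; pose proof (Rabs_pos x1); lra).
    assert (H2 : 4 * K <= g * q * Rabs x).
    { unfold R0 in Hx. pose proof (Rabs_pos x1).
      assert (H4 : 4 * K / (g * q) <= Rabs x) by lra.
      assert (Hgq : 0 < g * q) by nra.
      apply Rmult_le_compat_l with (r := g * q) in H4; [|lra].
      replace (g * q * (4 * K / (g * q))) with (4 * K) in H4 by (field; lra). lra. }
    rewrite <- abs_sq in B1. nra. }
  destruct (min_strip Phi R0 T2 x1 t1) as [x0 [t0 [Ht0 [Hm1 Hm]]]].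
  - unfold R0. pose proof (Rabs_pos x1). lra.
  - lra.
  - unfold R0; lra.
  - unfold T2; lra.
  - intros x t Ht. apply cont_Phi; auto. apply (smooth_cont _ _ _ _ Sphi).
  - exact B2.
  - lra.
  - assert (Ht0p : 0 < t0).
    { destruct (Rle_lt_or_eq_dec 0 t0 (proj1 Ht0)) as [|E]; auto. subst t0.
      specialize (B3 x0). lra. }
    assert (Ht0T : t0 < T2).
    { destruct (Rle_lt_or_eq_dec t0 T2 (proj2 Ht0)) as [|E]; auto. subst t0.
      specialize (B5 x0). lra. }
    assert (Hvis := Us phi x0 t0 Tphi Ht0p).
    assert (Hge : pt phi x0 t0 + Fq (px phi x0 t0) - eps * pxx phi x0 t0 >= 0).
    { apply Hvis. exists (T2 - t0). split; [lra|].
      intros x t Htp Hx Ht. apply Rle_ge.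
      assert (0 <= t <= T2) by (apply Rabs_def2 in Ht; lra).
      specialize (Hm x t H). unfold Phi in Hm. lra. }
    destruct (Ephi x0 t0) as [E1 [E2 E3]].
    rewrite E1, E2, E3 in Hge. clear E1 E2 E3.
    set (k := exp (t0 - T2)) in *.
    assert (Hk : 0 < k <= 1).
    { split. apply exp_pos. unfold k. rewrite <- exp_0. apply exp_le_exp. lra. }
    set (fp := be * (la * exp (la * (t0 - t1)))) in *.
    assert (Hfp : 0 <= fp).
    { unfold fp. pose proof (exp_pos (la * (t0 - t1))). apply Rmult_le_pos; [lra|]. nra. }
    specialize (Veq x0 t0 Ht0p).
    rewrite !Fq_eq in *.
    set (a := Dx x0 t0) in *. set (B := - (k * x0)).
    assert (Hconv : (mu * a + 1 * (- (g * k / 2) * (2 * x0))) * (mu * a + 1 * (- (g * k / 2) * (2 * x0))) / 2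
                    <= mu * (a * a / 2) + g * (B * B / 2)).
    { replace (1 * (- (g * k / 2) * (2 * x0))) with (g * B). 2:{ unfold B. field. }
      assert (mu * (a * a / 2) + g * (B * B / 2) - (mu * a + g * B) * (mu * a + g * B) / 2
              = mu * g * ((a - B) * (a - B)) / 2)  by (unfold mu; field).
      assert (0 <= mu * g * ((a - B) * (a - B))).
      { apply Rmult_le_pos. unfold mu; nra. apply Rle_0_sqr. }
      lra. }
    assert (Hpsi : - (g * k / 2) * (x0 * x0) + (- (g * (1 + eps))) + g * (B * B / 2) - eps * (- (g * k / 2) * 2) <= - g).
    { unfold B. assert (0 <= x0 * x0) by nra.
      assert (0 <= (k - k * k) * (x0 * x0)) by (apply Rmult_le_pos; nra).
      assert (0 <= eps * (1 - k)) by (apply Rmult_le_pos; lra). nra. }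
    assert (Hmu : 0 <= mu) by (unfold mu; lra).
    assert (mu * (Dt x0 t0 + a * a / 2 - eps * Dxx x0 t0) <= 0).
    { apply Rmult_le_0_l; auto; lra. }
    replace (- (g * exp (t0 - T2) / 2)) with (- (g * k / 2)) in Hge by (unfold k; ring).
    nra.
Qed.

Lemma cmp_super (eps : R) (U v Dt Dx Dxx : R -> R -> R) :
  0 <= eps -> cont_closed_halfplane U -> linear_growth U -> visc_sub Fq eps U ->
  smooth v Dt Dx Dxx ->
  (forall x t, 0 < t -> Dt x t + Fq (Dx x t) - eps * Dxx x t >= 0) ->
  (forall x t, 0 < t -> Rabs (Dx x t) <= 1) ->
  (forall T, 0 < T -> exists K, forall x t, 0 <= t <= T -> - (K * (1 + Rabs x)) <= v x t) ->
  (forall x, U x 0 <= v x 0) ->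
  forall x t, 0 <= t -> U x t <= v x t.
Proof.
  intros Heps Uc Ug Us Sv Veq Vgrad Vg V0 x1 t1 Ht1.
  destruct (Rle_lt_or_eq_dec 0 t1 Ht1) as [Ht1p|Ht1z]; [|subst t1; apply V0].
  destruct (Rle_or_lt (U x1 t1) (v x1 t1)) as [|Hcon]; [auto|exfalso].
  set (th := U x1 t1 - v x1 t1).
  assert (Hth : 0 < th) by (unfold th; lra).
  set (T2 := t1 + 1).
  assert (HT2 : 0 < T2) by (unfold T2; lra).
  destruct (Ug T2 HT2) as [KU [HKU HU]].
  destruct (Vg T2 HT2) as [Kv HV].
  set (K := KU + Rabs Kv).
  assert (HK : 0 < K) by (unfold K; pose proof (Rabs_pos Kv); lra).
  assert (HUl : forall x t, 0 <= t <= T2 -> U x t <= K * (1 + Rabs x)).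
  { intros x t Ht. specialize (HU x t Ht). pose proof (Rle_abs (U x t)).
    pose proof (Rabs_pos x); pose proof (Rabs_pos Kv). unfold K. nra. }
  assert (HVu : forall x t, 0 <= t <= T2 -> - (K * (1 + Rabs x)) <= v x t).
  { intros x t Ht. specialize (HV x t Ht).
    pose proof (Rabs_pos x); pose proof (Rle_abs Kv). unfold K. nra. }
  set (q := exp (- T2) / 2).
  assert (Hq : 0 < q) by (unfold q; pose proof (exp_pos (-T2)); lra).
  set (psi := fun x t => (exp (t - T2) / 2) * (x * x) + (2 * (1 + eps) * t)).
  set (C0 := K + K * K / (4 * q)).
  assert (HC0 : 0 < C0).
  { unfold C0. assert (0 <= K * K / (4 * q)) by (apply Rle_mult_inv_pos; nra). lra. }
  set (A1 := psi x1 t1 - v x1 t1).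
  set (g := Rmin (1/2) (th / (4 * (C0 + Rabs A1 + 1)))).
  assert (HD : 0 < 4 * (C0 + Rabs A1 + 1)) by (pose proof (Rabs_pos A1); lra).
  assert (Hg : 0 < g <= 1/2).
  { split. apply Rmin_pos; [lra|]. apply Rdiv_lt_0_compat; lra. apply Rmin_l. }
  assert (HgA : g * (C0 + Rabs A1 + 1) <= th / 4).
  { assert (g <= th / (4 * (C0 + Rabs A1 + 1))) by apply Rmin_r.
    pose proof (Rabs_pos A1).
    apply Rmult_le_compat_r with (r := C0 + Rabs A1 + 1) in H; [|lra].
    replace (th / (4 * (C0 + Rabs A1 + 1)) * (C0 + Rabs A1 + 1)) with (th / 4) in H by (field; lra).
    lra. }
  set (mu := 1 - g).
  set (be := th / 4).
  assert (Hbe : 0 < be) by (unfold be; lra).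
  set (C1 := 2 * K + K * K / (g * q)).
  assert (HC1 : 0 < C1).
  { unfold C1. assert (0 <= K * K / (g * q)) by (apply Rle_mult_inv_pos; nra). lra. }
  set (la := C1 / be).
  assert (Hla : 0 < la) by (unfold la; apply Rdiv_lt_0_compat; lra).
  set (f := fun t => be * exp (la * (t - t1))).
  assert (Hf0 : forall t, 0 < f t) by (intros; unfold f; pose proof (exp_pos (la * (t - t1))); nra).
  set (w := fun x t => (g * exp (t - T2) / 2) * (x * x) + ((g * (2 * (1 + eps))) * t + f t)).
  assert (Sw : smooth w (fun x t => (g * exp (t - T2) / 2) * (x * x) + ((g * (2 * (1 + eps))) + be * (la * exp (la * (t - t1)))))
                        (fun x t => (g * exp (t - T2) / 2) * (2 * x)) (fun x t => (g * exp (t - T2) / 2) * 2)).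
  { apply (smooth_sep (fun t => (g * exp (t - T2) / 2)) (fun t => (g * exp (t - T2) / 2))
             (fun x => x * x) (fun x => 2 * x) (fun _ => 2)
             (fun t => (g * (2 * (1 + eps))) * t + f t) (fun t => (g * (2 * (1 + eps))) + be * (la * exp (la * (t - t1))))).
    - intros t. auto_derive; auto. unfold Rminus, Rdiv; ring.
    - intros t. unfold f. auto_derive; auto. unfold Rminus, Rdiv; ring.
    - intros x. auto_derive; auto. ring.
    - intros x. auto_derive; auto. ring.
    - intros t. apply exd_cont. auto_derive; auto.
    - intros t. apply exd_cont. auto_derive; auto.
    - intros x. apply exd_cont. auto_derive; auto. }
  set (phi := fun x t => mu * v x t + 1 * w x t).
  assert (Sphi := smooth_lin mu 1 _ _ _ _ _ _ _ _ Sv Sw).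
  fold phi in Sphi.
  destruct (smooth_test _ _ _ _ Sphi) as [Tphi Ephi].
  set (Phi := fun x t => phi x t - U x t).
  assert (B1 : forall x t, 0 <= t <= T2 -> Phi x t >= - (2 * K * (1 + Rabs x)) + g * q * (x * x) + f t).
  { intros x t Ht. unfold Phi, phi, w.
    specialize (HUl x t Ht). specialize (HVu x t Ht).
    assert (Hk : exp (- T2) <= exp (t - T2)) by (apply exp_le_exp; lra).
    assert (Hm : - (K * (1 + Rabs x)) <= mu * v x t).
    { pose proof (Rabs_pos x). assert (0 <= K * (1 + Rabs x)) by nra. unfold mu.
      destruct (Rle_or_lt 0 (v x t)); nra. }
    assert (g * q * (x * x) <= g * exp (t - T2) / 2 * (x * x)).
    { unfold q. assert (0 <= x * x) by nra.
      assert (0 <= g * (x * x) * (exp (t - T2) - exp (- T2))) by (apply Rmult_le_pos; [apply Rmult_le_pos|]; lra).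
      nra. }
    assert (0 <= g * (2 * (1 + eps)) * t) by (apply Rmult_le_pos; nra).
    lra. }
  assert (B3 : forall x, Phi x 0 >= - (th / 4)).
  { intros x. unfold Phi, phi, w.
    specialize (HUl x 0 ltac:(lra)). specialize (V0 x).
    replace (0 - T2) with (- T2) by ring. fold q.
    pose proof (quad_lb q K x Hq (Rlt_le _ _ HK)).
    pose proof (Hf0 0).
    assert (g * (q * (x * x) - K * Rabs x - K) >= - (g * C0)).
    { unfold C0. nra. }
    assert (g * C0 <= th / 4) by (pose proof (Rabs_pos A1); nra).
    replace (exp (- T2)) with (2 * q) by (unfold q; field).
    unfold mu. nra. }
  assert (B4 : Phi x1 t1 <= - (th / 2)).
  { unfold Phi, phi, w.
    assert (Hf1 : f t1 = be) by (unfold f; replace (la * (t1 - t1)) with 0 by ring; rewrite exp_0; ring).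
    rewrite Hf1.
    assert (g * A1 <= th / 4).
    { pose proof (Rle_abs A1). pose proof (Rabs_pos A1). nra. }
    unfold A1, psi in H. unfold mu, be. fold th. unfold th in *. nra. }
  assert (B5 : forall x, Phi x T2 > 0).
  { intros x. specialize (B1 x T2 ltac:(lra)).
    assert (HfT : f T2 > C1).
    { unfold f. replace (T2 - t1) with 1 by (unfold T2; ring).
      pose proof (exp_ineq1_le (la * 1)).
      unfold la in *. replace (C1 / be * 1) with (C1 / be) in * by ring.
      assert (be * (1 + C1 / be) = be + C1) by (field; lra). nra. }
    pose proof (quad_lb (g * q) (2 * K) x ltac:(nra) ltac:(lra)).
    assert (2 * K * (2 * K) / (4 * (g * q)) = K * K / (g * q)) by (field; nra).
    unfold C1 in HfT. lra. }
  set (R0 := Rabs x1 + 1 + 4 * K / (g * q)).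
  assert (HR0 : 0 <= 4 * K / (g * q)) by (apply Rle_mult_inv_pos; nra).
  assert (B2 : forall x t, 0 <= t <= T2 -> R0 <= Rabs x -> Phi x t >= 0).
  { intros x t Ht Hx. specialize (B1 x t Ht). pose proof (Hf0 t).
    assert (H1 : 1 <= Rabs x) by (unfold R0 in Hx; pose proof (Rabs_pos x1); lra).
    assert (H2 : 4 * K <= g * q * Rabs x).
    { unfold R0 in Hx. pose proof (Rabs_pos x1).
      assert (H4 : 4 * K / (g * q) <= Rabs x) by lra.
      assert (Hgq : 0 < g * q) by nra.
      apply Rmult_le_compat_l with (r := g * q) in H4; [|lra].
      replace (g * q * (4 * K / (g * q))) with (4 * K) in H4 by (field; lra). lra. }
    rewrite <- abs_sq in B1. nra. }
  destruct (min_strip Phi R0 T2 x1 t1) as [x0 [t0 [Ht0 [Hm1 Hm]]]].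
  - unfold R0. pose proof (Rabs_pos x1). lra.
  - lra.
  - unfold R0; lra.
  - unfold T2; lra.
  - intros x t Ht e He.
    destruct (cont_Phi U phi x t Uc (smooth_cont _ _ _ _ Sphi x t) Ht e He) as [d [Hd H]].
    exists d; split; auto. intros y s Hs Hy Hs'. specialize (H y s Hs Hy Hs').
    unfold Phi. replace (phi y s - U y s - (phi x t - U x t)) with (- (U y s - phi y s - (U x t - phi x t))) by ring.
    rewrite Rabs_Ropp; auto.
  - exact B2.
  - lra.
  - assert (Ht0p : 0 < t0).
    { destruct (Rle_lt_or_eq_dec 0 t0 (proj1 Ht0)) as [|E]; auto. subst t0.
      specialize (B3 x0). lra. }
    assert (Ht0T : t0 < T2).
    { destruct (Rle_lt_or_eq_dec t0 T2 (proj2 Ht0)) as [|E]; auto. subst t0.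
      specialize (B5 x0). lra. }
    assert (Hvis := Us phi x0 t0 Tphi Ht0p).
    assert (Hge : pt phi x0 t0 + Fq (px phi x0 t0) - eps * pxx phi x0 t0 <= 0).
    { apply Hvis. exists (T2 - t0). split; [lra|].
      intros x t Htp Hx Ht.
      assert (0 <= t <= T2) by (apply Rabs_def2 in Ht; lra).
      specialize (Hm x t H). unfold Phi in Hm. lra. }
    destruct (Ephi x0 t0) as [E1 [E2 E3]].
    rewrite E1, E2, E3 in Hge. clear E1 E2 E3.
    set (k := exp (t0 - T2)) in *.
    assert (Hk : 0 < k <= 1).
    { split. apply exp_pos. unfold k. rewrite <- exp_0. apply exp_le_exp. lra. }
    set (fp := be * (la * exp (la * (t0 - t1)))) in *.
    assert (Hfp : 0 <= fp).
    { unfold fp. pose proof (exp_pos (la * (t0 - t1))). apply Rmult_le_pos; [lra|]. nra. }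
    specialize (Veq x0 t0 Ht0p).
    specialize (Vgrad x0 t0 Ht0p).
    rewrite !Fq_eq in *.
    set (a := Dx x0 t0) in *. set (B := k * x0).
    assert (Ha : a * a <= 1).
    { rewrite <- abs_sq. pose proof (Rabs_pos a). nra. }
    assert (Hconv : (mu * a + 1 * ((g * k / 2) * (2 * x0))) * (mu * a + 1 * ((g * k / 2) * (2 * x0))) / 2
                    >= mu * (a * a / 2) + g * (B * B / 2) - g * (1 + B * B)).
    { replace (1 * ((g * k / 2) * (2 * x0))) with (g * B). 2:{ unfold B. field. }
      assert (mu * (a * a / 2) + g * (B * B / 2) - (mu * a + g * B) * (mu * a + g * B) / 2
              = mu * g * ((a - B) * (a - B)) / 2) by (unfold mu; field).
      assert (mu * g * ((a - B) * (a - B)) <= g * (2 * a * a + 2 * B * B)).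
      { assert (0 <= (a + B) * (a + B)) by apply Rle_0_sqr.
        assert (0 <= (a - B) * (a - B)) by apply Rle_0_sqr.
        assert (mu <= 1) by (unfold mu; lra).
        assert (mu * g * ((a - B) * (a - B)) <= g * ((a - B) * (a - B))).
        { assert (0 <= g * ((a - B) * (a - B))) by (apply Rmult_le_pos; lra).
          assert (0 <= (1 - mu) * (g * ((a - B) * (a - B)))) by (apply Rmult_le_pos; lra). nra. }
        nra. }
      nra. }
    assert (Hpsi : (g * k / 2) * (x0 * x0) + g * (2 * (1 + eps)) + g * (B * B / 2) - eps * ((g * k / 2) * 2) - g * (1 + B * B) >= g).
    { unfold B. assert (0 <= x0 * x0) by nra.
      assert (0 <= (k - k * k) * (x0 * x0)) by (apply Rmult_le_pos; nra).
      assert (0 <= g * ((k - k * k) * (x0 * x0))) by (apply Rmult_le_pos; nra).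
      assert (0 <= eps * (2 - k)) by (apply Rmult_le_pos; lra).
      assert (0 <= g * (eps * (2 - k))) by (apply Rmult_le_pos; lra). nra. }
    assert (Hmu : 0 <= mu) by (unfold mu; lra).
    assert (mu * (Dt x0 t0 + a * a / 2 - eps * Dxx x0 t0) >= 0).
    { apply Rle_ge, Rmult_le_pos; auto; lra. }
    replace (g * exp (t0 - T2) / 2) with (g * k / 2) in Hge by (unfold k; ring).
    nra.
Qed.



Definition cc : R := 2 / sqrt PI.

Lemma sqrtPI_pos : 0 < sqrt PI.
Proof. apply sqrt_lt_R0, PI_RGT_0. Qed.

Lemma cc_pos : 0 < cc.
Proof. unfold cc. pose proof sqrtPI_pos. apply Rdiv_lt_0_compat; lra. Qed.

Lemma cc_s : cc * (sqrt PI / 2) = 1.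
Proof. unfold cc. pose proof sqrtPI_pos. field. lra. Qed.

Lemma s_sq : (sqrt PI / 2) * (sqrt PI / 2) = PI / 4.
Proof. pose proof (sqrt_sqrt PI (Rlt_le _ _ PI_RGT_0)). nra. Qed.

Lemma J_ge0 y : 0 <= J y.
Proof.
  unfold J. apply RInt_ge_0; [lra| |].
  - apply exRInt_cont; intros z _. apply exd_cont. unfold Jf. auto_derive. pose proof (tpos z); lra.
  - intros t _. unfold Jf. pose proof (tpos t). pose proof (exp_pos (- (y * y) * (1 + t * t))).
    apply Rlt_le, Rdiv_lt_0_compat; lra.
Qed.

Lemma J_le y : J y <= exp (- (y * y)).
Proof.
  unfold J.
  assert (RInt (fun _ => exp (- (y * y))) 0 1 = exp (- (y * y))).
  { rewrite RInt_const. unfold scal; simpl; unfold mult; simpl. ring. }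
  apply Rle_trans with (RInt (fun _ => exp (- (y * y))) 0 1); [|lra]. apply RInt_le; [lra| | |].
  - apply exRInt_cont; intros z _. apply exd_cont. unfold Jf. auto_derive. pose proof (tpos z); lra.
  - apply exRInt_cont; intros z _. apply exd_cont. auto_derive. auto.
  - intros t _. unfold Jf. pose proof (tpos t).
    assert (exp (- (y * y) * (1 + t * t)) <= exp (- (y * y))).
    { apply exp_le_exp. assert (0 <= y * y * (t * t)) by (apply Rmult_le_pos; nra). nra. }
    pose proof (exp_pos (- (y * y) * (1 + t * t))).
    apply (Rmult_le_reg_r (1 + t * t)); auto.
    field_simplify; [|lra]. nra.
Qed.

Lemma gE_sq_le y : gE y * gE y <= PI / 4.
Proof. pose proof (K_const y). pose proof (J_ge0 y). lra. Qed.

Lemma gE_sq_ge y : PI / 4 - exp (- (y * y)) <= gE y * gE y.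
Proof. pose proof (K_const y). pose proof (J_le y). lra. Qed.

Lemma cE_bound y : Rabs (cc * gE y) <= 1.
Proof.
  pose proof (gE_sq_le y). pose proof cc_pos. pose proof cc_s. pose proof s_sq.
  set (s := sqrt PI / 2) in *. pose proof sqrtPI_pos.
  assert (Hs : 0 < s) by (unfold s; lra).
  apply Rsqr_incr_0_var. 2: lra.
  rewrite <- Rsqr_abs. unfold Rsqr.
  assert (cc * gE y * (cc * gE y) = (cc * cc) * (gE y * gE y)) by ring.
  assert (cc * cc * (s * s) = 1) by nra.
  nra.
Qed.

Lemma gE_nonneg y : 0 <= y -> 0 <= gE y.
Proof.
  intros Hy. unfold gE. apply RInt_ge_0; auto. apply gf_ex_RInt.
  intros; unfold gf; apply Rlt_le, exp_pos.
Qed.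

Lemma cE_tail y : 0 <= y -> 1 - cc * gE y <= cc * cc * exp (- (y * y)).
Proof.
  intros Hy.
  pose proof (gE_sq_le y). pose proof (gE_sq_ge y). pose proof (gE_nonneg y Hy).
  pose proof cc_pos. pose proof cc_s as Hcs. pose proof s_sq. pose proof sqrtPI_pos.
  set (s := sqrt PI / 2) in *. set (e := gE y) in *. set (X := exp (- (y * y))) in *.
  assert (Hs : 0 < s) by (unfold s; lra).
  assert (He : e <= s) by (apply Rsqr_incr_0_var; unfold Rsqr; lra).
  assert ((s - e) * s <= X).
  { assert (0 <= (s - e) * e) by (apply Rmult_le_pos; lra). nra. }
  assert (E1 : 1 - cc * e = cc * (s - e)) by nra.
  assert (E2 : cc * (s - e) * (cc * s) <= cc * cc * X).
  { replace (cc * (s - e) * (cc * s)) with (cc * cc * ((s - e) * s)) by ring.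
    apply Rmult_le_compat_l; [nra|lra]. }
  rewrite Hcs in E2. lra.
Qed.

Lemma gE_odd y : gE (- y) = - gE y.
Proof.
  unfold gE.
  assert (HH := RInt_comp_lin gf (-1) 0 0 y).
  replace (-1 * 0 + 0) with 0 in HH by ring.
  replace (-1 * y + 0) with (- y) in HH by ring.
  rewrite <- HH by apply gf_ex_RInt.
  rewrite (RInt_ext _ (fun t => -1 * gf t)).
  - rewrite RInt_mult_l by apply gf_ex_RInt. ring.
  - intros t _. unfold scal; simpl; unfold mult; simpl. unfold gf. f_equal. f_equal. f_equal. ring.
Qed.

Definition GG (y : R) : R := y * (1 - cc * gE y) - cc / 2 * exp (- (y * y)).

Lemma gE_exd y : ex_derive gE y.
Proof. eexists; apply gE_deriv. Qed.

Lemma gE_D y : Derive gE y = gf y.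
Proof. apply is_derive_unique, gE_deriv. Qed.

Lemma GG_deriv (y : R) : is_derive GG y (1 - cc * gE y).
Proof.
  unfold GG. auto_derive.
  - apply gE_exd.
  - replace (Derive (fun x => gE x) y) with (gf y) by (symmetry; apply is_derive_unique, gE_deriv).
    unfold gf. field.
Qed.

Lemma GG_mono y z : 0 <= y <= z -> GG y <= GG z.
Proof.
  intros Hyz.
  destruct (MVT_gen GG y z (fun u => 1 - cc * gE u)) as [xi [Hxi E]].
  - intros; apply GG_deriv.
  - intros; eapply isd_cpt; apply GG_deriv.
  - pose proof (cE_bound xi). pose proof (Rle_abs (cc * gE xi)).
    assert (0 <= (1 - cc * gE xi) * (z - y)) by (apply Rmult_le_pos; lra). lra.
Qed.

Lemma GG_nonpos y : 0 <= y -> GG y <= 0.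
Proof.
  intros Hy. destruct (Rle_or_lt (GG y) 0) as [|Hpos]; auto. exfalso.
  pose proof cc_pos.
  set (z := Rmax y (1 + cc * cc / GG y)).
  assert (Hz1 : 1 + cc * cc / GG y <= z) by apply Rmax_r.
  assert (Hzy : y <= z) by apply Rmax_l.
  assert (Hq : 0 < cc * cc / GG y) by (apply Rdiv_lt_0_compat; nra).
  assert (Hz : 0 < z) by lra.
  pose proof (GG_mono y z (conj Hy Hzy)).
  assert (HG : GG z <= z * (cc * cc * exp (- (z * z)))).
  { unfold GG. pose proof (cE_tail z (Rlt_le _ _ Hz)). pose proof (exp_pos (- (z * z))). nra. }
  assert (Hexp : z * z * exp (- (z * z)) <= 1).
  { pose proof (exp_ineq1_le (z * z)). pose proof (exp_pos (z * z)).
    rewrite exp_Ropp. apply (Rmult_le_reg_r (exp (z * z))); auto.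
    field_simplify; lra. }
  assert (HG2 : GG z * z <= cc * cc) by nra.
  assert (cc * cc < GG y * z).
  { apply (Rmult_lt_reg_r (/ GG y)). apply Rinv_0_lt_compat; lra.
    replace (GG y * z * / GG y) with z by (field; lra). unfold Rdiv in Hz1. lra. }
  nra.
Qed.

Definition HH (x a : R) : R := cc * x * gE (x / a) + cc * (a / 2) * exp (- ((x / a) * (x / a))).

Lemma HH_even x a : HH (- x) a = HH x a.
Proof.
  unfold HH. replace (- x / a) with (- (x / a)) by (unfold Rdiv; ring).
  rewrite gE_odd. replace (- (x / a) * - (x / a)) with (x / a * (x / a)) by ring. ring.
Qed.

Lemma HH_ge_pos x a : 0 < a -> 0 <= x -> x <= HH x a.
Proof.
  intros Ha Hx. set (y := x / a).
  assert (Hy : 0 <= y) by (unfold y; apply Rle_mult_inv_pos; lra).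
  assert (Ex : x = a * y) by (unfold y; field; lra).
  pose proof (GG_nonpos y Hy). unfold GG in H.
  unfold HH. fold y.
  replace (cc * x * gE y + cc * (a / 2) * exp (- (y * y))) with (a * (cc * y * gE y + cc / 2 * exp (- (y * y)))) by (rewrite Ex; field; lra).
  rewrite Ex at 1. nra.
Qed.

Lemma HH_ge_abs x a : 0 < a -> Rabs x <= HH x a.
Proof.
  intros Ha. destruct (Rle_or_lt 0 x) as [Hx|Hx].
  - rewrite Rabs_pos_eq by lra. apply HH_ge_pos; auto.
  - rewrite Rabs_left by lra. rewrite <- HH_even. apply HH_ge_pos; lra.
Qed.

Lemma HH_le_pos x a : 0 < a -> 0 <= x -> HH x a <= x + cc * a / 2.
Proof.
  intros Ha Hx. unfold HH.
  pose proof (cE_bound (x / a)). pose proof (Rle_abs (cc * gE (x / a))).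
  pose proof cc_pos.
  assert (exp (- (x / a * (x / a))) <= 1).
  { rewrite <- exp_0. apply exp_le_exp. assert (0 <= x / a * (x / a)) by nra. lra. }
  assert (x * (cc * gE (x / a)) <= x * 1) by (apply Rmult_le_compat_l; lra).
  assert (cc * (a / 2) * exp (- (x / a * (x / a))) <= cc * (a / 2) * 1).
  { apply Rmult_le_compat_l; [|lra]. apply Rmult_le_pos; lra. }
  replace (cc * x * gE (x / a)) with (x * (cc * gE (x / a))) by ring.
  lra.
Qed.

Lemma HH_le x a : 0 < a -> HH x a <= Rabs x + cc * a / 2.
Proof.
  intros Ha. destruct (Rle_or_lt 0 x) as [Hx|Hx].
  - rewrite Rabs_pos_eq by lra. apply HH_le_pos; auto.
  - rewrite Rabs_left by lra. rewrite <- HH_even. apply HH_le_pos; lra.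
Qed.

Lemma gE_0 : gE 0 = 0.
Proof. unfold gE; apply (@RInt_point R_CompleteNormedModule). Qed.

Lemma HH_0 a : a <> 0 -> HH 0 a = cc * a / 2.
Proof.
  intros Ha. unfold HH. replace (0 / a) with 0 by (field; auto). rewrite gE_0.
  replace (- (0 * 0)) with 0 by ring. rewrite exp_0. field.
Qed.

Lemma gE_Dfun y : Derive (fun x => gE x) y = gf y.
Proof. apply is_derive_unique, gE_deriv. Qed.

Lemma dHx (x a : R) : a <> 0 -> is_derive (fun y => HH y a) x (cc * gE (x / a)).
Proof.
  intros Ha. unfold HH. auto_derive.
  - repeat split; auto; apply gE_exd.
  - rewrite gE_Dfun. unfold gf, Rdiv. field. auto.
Qed.

Lemma dHxx (x a : R) : a <> 0 -> is_derive (fun y => cc * gE (y / a)) x (cc / a * exp (- ((x / a) * (x / a)))).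
Proof.
  intros Ha. auto_derive.
  - repeat split; auto; apply gE_exd.
  - rewrite gE_Dfun. unfold gf, Rdiv. field. auto.
Qed.

Lemma dHa (x a : R) : a <> 0 -> is_derive (fun b => HH x b) a (cc / 2 * exp (- ((x / a) * (x / a)))).
Proof.
  intros Ha. unfold HH. auto_derive.
  - repeat split; auto; apply gE_exd.
  - rewrite gE_Dfun. unfold gf, Rdiv. field. auto.
Qed.

Lemma c2d_xA (A : R -> R) x t : (forall t, 0 < A t) -> (forall t, continuity_pt A t) ->
  continuity_2d_pt (fun y s => y / A s) x t.
Proof.
  intros Hpos Hc. unfold Rdiv. apply continuity_2d_pt_mult. apply continuity_2d_pt_id1.
  apply (c2d_t (fun s => / A s)). apply (continuity_pt_inv A). auto. specialize (Hpos t); lra.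
Qed.

Lemma c2d_expA (A : R -> R) x t : (forall t, 0 < A t) -> (forall t, continuity_pt A t) ->
  continuity_2d_pt (fun y s => exp (- ((y / A s) * (y / A s)))) x t.
Proof.
  intros Hpos Hc.
  apply (continuity_1d_2d_pt_comp exp (fun y s => - ((y / A s) * (y / A s)))).
  apply derivable_continuous_pt, derivable_pt_exp.
  apply continuity_2d_pt_opp, continuity_2d_pt_mult; apply c2d_xA; auto.
Qed.

Lemma c2d_gEA (A : R -> R) x t : (forall t, 0 < A t) -> (forall t, continuity_pt A t) ->
  continuity_2d_pt (fun y s => gE (y / A s)) x t.
Proof.
  intros Hpos Hc.
  apply (continuity_1d_2d_pt_comp gE (fun y s => y / A s)).
  eapply isd_cpt; apply gE_deriv. apply c2d_xA; auto.
Qed.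

Lemma smooth_HA (A A' : R -> R) : (forall t, 0 < A t) -> (forall t, is_derive A t (A' t)) ->
  (forall t, continuous A' t) ->
  smooth (fun x t => HH x (A t)) (fun x t => cc / 2 * exp (- ((x / A t) * (x / A t))) * A' t)
    (fun x t => cc * gE (x / A t)) (fun x t => cc / A t * exp (- ((x / A t) * (x / A t)))).
Proof.
  intros Hpos Hd Hc'.
  assert (Hc : forall t, continuity_pt A t) by (intros; eapply isd_cpt; eauto).
  assert (Hne : forall t, A t <> 0) by (intros t; specialize (Hpos t); lra).
  intros x t. split; [|split; [|split; [|split; [|split; [|split]]]]].
  - apply (isd_comp (fun b => HH x b) A t). apply dHa; auto. auto.
  - apply dHx; auto.
  - apply dHxx; auto.
  - unfold HH. apply continuity_2d_pt_plus.
    + apply continuity_2d_pt_mult. apply continuity_2d_pt_mult. apply continuity_2d_pt_const.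
      apply continuity_2d_pt_id1. apply c2d_gEA; auto.
    + apply continuity_2d_pt_mult. apply continuity_2d_pt_mult. apply continuity_2d_pt_const.
      unfold Rdiv. apply continuity_2d_pt_mult. apply c2d_t; auto. apply continuity_2d_pt_const.
      apply c2d_expA; auto.
  - apply continuity_2d_pt_mult. apply continuity_2d_pt_mult. apply continuity_2d_pt_const.
    apply c2d_expA; auto. apply c2d_t; apply cont_cpt; auto.
  - apply continuity_2d_pt_mult. apply continuity_2d_pt_const. apply c2d_gEA; auto.
  - apply continuity_2d_pt_mult. unfold Rdiv. apply continuity_2d_pt_mult. apply continuity_2d_pt_const.
    apply (c2d_t (fun s => / A s)). apply (continuity_pt_inv A); auto.
    apply c2d_expA; auto.
Qed.



Lemma g0_abs x : g0 x = - Rabs x.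
Proof. reflexivity. Qed.

Lemma lower_HA eps U (A A' : R -> R) :
  0 <= eps -> visc_solution Fq eps g0 U ->
  (forall t, 0 < A t) -> (forall t, is_derive A t (A' t)) -> (forall t, continuous A' t) ->
  (forall t, 0 < t -> 2 * eps <= A t * A' t) ->
  forall x t, 0 <= t -> - HH x (A t) - t / 2 <= U x t.
Proof.
  intros Heps [Uc [Ug [U0 [Usub Usup]]]] Hpos Hd Hc HAA x t Ht.
  assert (S1 := smooth_HA A A' Hpos Hd Hc).
  assert (S2 := smooth_sep (fun _ => 0) (fun _ => 0) (fun _ => 0) (fun _ => 0) (fun _ => 0)
                  (fun t => - t / 2) (fun _ => - / 2)
                  ltac:(intros; apply isd_const) ltac:(intros; auto_derive; auto; field)
                  ltac:(intros; apply isd_const) ltac:(intros; apply isd_const)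
                  ltac:(intros; apply exd_cont; auto_derive; auto)
                  ltac:(intros; apply exd_cont; auto_derive; auto)
                  ltac:(intros; apply exd_cont; auto_derive; auto)).
  assert (S := smooth_lin (-1) 1 _ _ _ _ _ _ _ _ S1 S2).
  assert (HC := cmp_sub eps U _ _ _ _ Heps Uc Ug Usup S).
  simpl in HC.
  replace (- HH x (A t) - t / 2) with (-1 * HH x (A t) + 1 * (0 * 0 + - t / 2)) by field.
  apply HC; auto.
  - intros y s Hs. rewrite Fq_eq.
    set (E := exp (- (y / A s * (y / A s)))).
    assert (HE : 0 < E) by apply exp_pos.
    pose proof (cE_bound (y / A s)) as HB. set (G := cc * gE (y / A s)) in *.
    assert (HG : G * G <= 1) by (rewrite <- abs_sq; pose proof (Rabs_pos G); nra).
    specialize (HAA s Hs). specialize (Hpos s). pose proof cc_pos.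
    assert (H1 : cc * E * (eps / A s - A' s / 2) <= 0).
    { assert (eps / A s - A' s / 2 <= 0).
      { apply (Rmult_le_reg_r (A s)); auto. field_simplify; lra. }
      assert (0 <= cc * E) by nra. nra. }
    assert (E1 : -1 * (cc / 2 * E * A' s) + 1 * (0 * 0 + - / 2) +
       (-1 * G + 1 * (0 * 0)) * (-1 * G + 1 * (0 * 0)) / 2 -
       eps * (-1 * (cc / A s * E) + 1 * (0 * 0))
       = cc * E * (eps / A s - A' s / 2) + (G * G - 1) / 2) by (field; lra).
    unfold E, G in *. rewrite E1. lra.
  - intros T HT. exists 1. intros y s Hs. pose proof (HH_ge_abs y (A s) (Hpos s)).
    pose proof (Rabs_pos y). lra.
  - intros y. rewrite U0, g0_abs. pose proof (HH_ge_abs y (A 0) (Hpos 0)). lra.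
Qed.

Lemma upper_HA eps U (A A' : R -> R) :
  0 <= eps -> visc_solution Fq eps g0 U ->
  (forall t, 0 < A t) -> (forall t, is_derive A t (A' t)) -> (forall t, continuous A' t) ->
  (forall t, 0 < t -> A t * A' t <= 2 * eps) ->
  (forall T, 0 < T -> exists M, 0 <= M /\ forall t, 0 <= t <= T -> A t <= M) ->
  forall x t, 0 <= t -> U x t <= - HH x (A t) + cc * A 0 / 2.
Proof.
  intros Heps [Uc [Ug [U0 [Usub Usup]]]] Hpos Hd Hc HAA HM x t Ht.
  assert (S1 := smooth_HA A A' Hpos Hd Hc).
  assert (S2 := smooth_sep (fun _ => 0) (fun _ => 0) (fun _ => 0) (fun _ => 0) (fun _ => 0)
                  (fun _ => cc * A 0 / 2) (fun _ => 0)
                  ltac:(intros; apply isd_const) ltac:(intros; apply isd_const)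
                  ltac:(intros; apply isd_const) ltac:(intros; apply isd_const)
                  ltac:(intros; apply exd_cont; auto_derive; auto)
                  ltac:(intros; apply exd_cont; auto_derive; auto)
                  ltac:(intros; apply exd_cont; auto_derive; auto)).
  assert (S := smooth_lin (-1) 1 _ _ _ _ _ _ _ _ S1 S2).
  assert (HC := cmp_super eps U _ _ _ _ Heps Uc Ug Usub S).
  simpl in HC.
  replace (- HH x (A t) + cc * A 0 / 2) with (-1 * HH x (A t) + 1 * (0 * 0 + cc * A 0 / 2)) by field.
  pose proof cc_pos.
  apply HC; auto.
  - intros y s Hs. rewrite Fq_eq.
    set (E := exp (- (y / A s * (y / A s)))).
    assert (HE : 0 < E) by apply exp_pos.
    set (G := cc * gE (y / A s)) in *.
    specialize (HAA s Hs). specialize (Hpos s).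
    assert (H1 : cc * E * (eps / A s - A' s / 2) >= 0).
    { assert (eps / A s - A' s / 2 >= 0).
      { apply Rle_ge. apply (Rmult_le_reg_r (A s)); auto. field_simplify; lra. }
      assert (0 <= cc * E) by nra. nra. }
    assert (E1 : -1 * (cc / 2 * E * A' s) + 1 * (0 * 0 + 0) +
       (-1 * G + 1 * (0 * 0)) * (-1 * G + 1 * (0 * 0)) / 2 -
       eps * (-1 * (cc / A s * E) + 1 * (0 * 0))
       = cc * E * (eps / A s - A' s / 2) + (G * G) / 2) by (field; lra).
    unfold E, G in *. rewrite E1. assert (0 <= (cc * gE (y / A s)) * (cc * gE (y / A s))) by apply Rle_0_sqr. lra.
  - intros y s Hs. replace (-1 * (cc * gE (y / A s)) + 1 * (0 * 0)) with (- (cc * gE (y / A s))) by ring.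
    rewrite Rabs_Ropp. apply cE_bound.
  - intros T HT. destruct (HM T HT) as [M [HM0 HMb]].
    exists (1 + cc * M / 2). intros y s Hs.
    pose proof (HH_le y (A s) (Hpos s)). specialize (HMb s Hs). pose proof (Hpos 0).
    pose proof (Rabs_pos y).
    assert (cc * A s <= cc * M) by (apply Rmult_le_compat_l; lra).
    assert (0 <= cc * A 0) by nra.
    assert (0 <= cc * M * Rabs y) by (apply Rmult_le_pos; nra).
    nra.
  - intros y. rewrite U0, g0_abs. pose proof (HH_le y (A 0) (Hpos 0)). lra.
Qed.

Lemma upper_lin eps U (sg : R) :
  sg * sg = 1 -> 0 <= eps -> visc_solution Fq eps g0 U ->
  forall x t, 0 <= t -> U x t <= sg * x - t / 2.
Proof.
  intros Hsg Heps [Uc [Ug [U0 [Usub Usup]]]] x t Ht.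
  assert (S := smooth_sep (fun _ => 1) (fun _ => 0) (fun x => sg * x) (fun _ => sg) (fun _ => 0)
                  (fun t => - t / 2) (fun _ => - / 2)
                  ltac:(intros; apply isd_const) ltac:(intros; auto_derive; auto; field)
                  ltac:(intros; auto_derive; auto; ring) ltac:(intros; apply isd_const)
                  ltac:(intros; apply exd_cont; auto_derive; auto)
                  ltac:(intros; apply exd_cont; auto_derive; auto)
                  ltac:(intros; apply exd_cont; auto_derive; auto)).
  assert (HC := cmp_super eps U _ _ _ _ Heps Uc Ug Usub S).
  simpl in HC.
  replace (sg * x - t / 2) with (1 * (sg * x) + - t / 2) by field.
  assert (Hsa : Rabs sg = 1).
  { assert (Rabs sg * Rabs sg = 1) by (rewrite abs_sq; auto). pose proof (Rabs_pos sg). nra. }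
  apply HC; auto.
  - intros y s Hs. rewrite Fq_eq. nra.
  - intros y s Hs. rewrite Rmult_1_l, Hsa. lra.
  - intros T HT. exists (1 + T / 2). intros y s Hs.
    assert (- Rabs y <= sg * y).
    { rewrite <- (Rmult_1_l (Rabs y)), <- Hsa, <- Rabs_mult. pose proof (Rle_abs (- (sg * y))).
      rewrite Rabs_Ropp in H. lra. }
    pose proof (Rabs_pos y). nra.
  - intros y. rewrite U0, g0_abs. 
    assert (- Rabs y <= sg * y).
    { rewrite <- (Rmult_1_l (Rabs y)), <- Hsa, <- Rabs_mult. pose proof (Rle_abs (- (sg * y))).
      rewrite Rabs_Ropp in H. lra. }
    lra.
Qed.

Lemma upper_abs eps U : 0 <= eps -> visc_solution Fq eps g0 U ->
  forall x t, 0 <= t -> U x t <= - Rabs x - t / 2.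
Proof.
  intros Heps HU x t Ht.
  pose proof (upper_lin eps U 1 ltac:(ring) Heps HU x t Ht).
  pose proof (upper_lin eps U (-1) ltac:(ring) Heps HU x t Ht).
  destruct (Rle_or_lt 0 x).
  - rewrite Rabs_pos_eq by lra. lra.
  - rewrite Rabs_left by lra. lra.
Qed.

Lemma cpt_mult (f g : R -> R) x : continuity_pt f x -> continuity_pt g x -> continuity_pt (fun y => f y * g y) x.
Proof. intros; apply (continuity_pt_mult f g); auto. Qed.

Lemma cpt_inv (f : R -> R) x : continuity_pt f x -> f x <> 0 -> continuity_pt (fun y => / f y) x.
Proof. intros; apply (continuity_pt_inv f); auto. Qed.

Lemma cpt_comp (f g : R -> R) x : continuity_pt g x -> continuity_pt f (g x) -> continuity_pt (fun y => f (g y)) x.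
Proof. intros; apply (continuity_pt_comp g f); auto. Qed.

Lemma A_tau eps (tau tau' : R -> R) : 0 < eps -> (forall t, 0 < tau t) ->
  (forall t, is_derive tau t (tau' t)) -> (forall t, continuous tau' t) ->
  (forall t, 0 < 2 * sqrt (eps * tau t)) /\
  (forall t, is_derive (fun t => 2 * sqrt (eps * tau t)) t (eps * tau' t / sqrt (eps * tau t))) /\
  (forall t, continuous (fun t => eps * tau' t / sqrt (eps * tau t)) t) /\
  (forall t, 2 * sqrt (eps * tau t) * (eps * tau' t / sqrt (eps * tau t)) = 2 * eps * tau' t).
Proof.
  intros He Hpos Hd Hc.
  assert (Hs : forall t, 0 < sqrt (eps * tau t)) by (intros; apply sqrt_lt_R0; specialize (Hpos t); nra).
  split; [|split; [|split]].
  - intros t; specialize (Hs t); lra.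
  - intros t. eapply isd_ext; [intros; reflexivity| |].
    2:{ apply isd_scal. apply (is_derive_sqrt (fun t => eps * tau t)). apply isd_scal, Hd.
        specialize (Hpos t); nra. }
    specialize (Hs t). field. lra.
  - intros t. apply continuity_pt_filterlim. unfold Rdiv.
    apply cpt_mult. apply cpt_mult. apply continuity_pt_const; intros a b; auto.
    apply cont_cpt; auto.
    apply cpt_inv. apply (cpt_comp sqrt (fun t => eps * tau t)).
    apply cpt_mult. apply continuity_pt_const; intros a b; auto. eapply isd_cpt; eauto.
    apply continuity_pt_sqrt. specialize (Hpos t); nra.
    specialize (Hs t); lra.
  - intros t. specialize (Hs t). field. lra.
Qed.

Lemma sqrt_add_le a b : 0 <= a -> 0 <= b -> sqrt (a + b) <= sqrt a + sqrt b.
Proof.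
  intros Ha Hb. pose proof (sqrt_pos a). pose proof (sqrt_pos b).
  apply Rsqr_incr_0_var; [|lra]. unfold Rsqr.
  rewrite sqrt_sqrt by lra.
  replace ((sqrt a + sqrt b) * (sqrt a + sqrt b)) with (sqrt a * sqrt a + sqrt b * sqrt b + 2 * sqrt a * sqrt b) by ring.
  rewrite !sqrt_sqrt by lra. nra.
Qed.

Lemma le_by_lin X Y k : 0 <= k -> (forall s, 0 < s -> X - k * s <= Y) -> X <= Y.
Proof.
  intros Hk H. destruct (Rle_or_lt X Y) as [|Hc]; auto. exfalso.
  specialize (H ((X - Y) / (2 * (k + 1))) ltac:(apply Rdiv_lt_0_compat; lra)).
  assert (k * ((X - Y) / (2 * (k + 1))) <= (X - Y) / 2).
  { apply (Rmult_le_reg_r (2 * (k + 1))); [lra|]. field_simplify; [|lra]. nra. }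
  lra.
Qed.

Lemma le_by_sqrt X Y k : 0 < k -> (forall s, 0 < s -> X - sqrt (k * s) <= Y) -> X <= Y.
Proof.
  intros Hk H. destruct (Rle_or_lt X Y) as [|Hc]; auto. exfalso.
  set (d := (X - Y) / 2).
  specialize (H (d * d / k) ltac:(unfold d; apply Rdiv_lt_0_compat; nra)).
  replace (k * (d * d / k)) with (d * d) in H by (field; lra).
  rewrite sqrt_square in H by (unfold d; lra). unfold d in H. lra.
Qed.

Definition tau1 (s t : R) : R := t + s + s * ((1 - exp (- t / s)) * (1 - exp (- t / s))).
Definition tau1' (s t : R) : R := 1 + 2 * (1 - exp (- t / s)) * exp (- t / s).
Definition tau2 (s t : R) : R := t + s * exp (- t / s).
Definition tau2' (s t : R) : R := 1 - exp (- t / s).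

Lemma tau1_d s t : 0 < s -> is_derive (tau1 s) t (tau1' s t).
Proof. intros Hs. unfold tau1, tau1'. auto_derive; [lra|]. unfold Rdiv. field. lra. Qed.

Lemma tau2_d s t : 0 < s -> is_derive (tau2 s) t (tau2' s t).
Proof. intros Hs. unfold tau2, tau2'. auto_derive; [lra|]. unfold Rdiv. field. lra. Qed.

Lemma tau1'_c s t : 0 < s -> continuous (tau1' s) t.
Proof. intros Hs. apply exd_cont. unfold tau1'. auto_derive. lra. Qed.

Lemma tau2'_c s t : 0 < s -> continuous (tau2' s) t.
Proof. intros Hs. apply exd_cont. unfold tau2'. auto_derive. lra. Qed.

Lemma exp_neg_le1 t s : 0 < s -> 0 <= t -> exp (- t / s) <= 1.
Proof. intros Hs Ht. rewrite <- exp_0. apply exp_le_exp. unfold Rdiv. assert (0 <= t * / s) by (apply Rmult_le_pos; [lra|]; left; apply Rinv_0_lt_compat; lra). lra. Qed.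

Lemma exp_lb t s : 0 < s -> 1 - t / s <= exp (- t / s).
Proof. intros Hs. pose proof (exp_ineq1_le (- t / s)). unfold Rdiv in *. lra. Qed.

Lemma tau1_pos s t : 0 < s -> 0 < tau1 s t.
Proof.
  intros Hs. unfold tau1. destruct (Rle_or_lt 0 t).
  - assert (0 <= s * ((1 - exp (- t / s)) * (1 - exp (- t / s)))) by (apply Rmult_le_pos; [lra|apply Rle_0_sqr]). lra.
  - pose proof (exp_lb t s Hs).
    assert (H1 : - t / s <= exp (- t / s) - 1) by (unfold Rdiv in *; lra).
    assert (H2 : 0 < - t / s) by (unfold Rdiv; apply Rmult_lt_0_compat; [lra|apply Rinv_0_lt_compat; lra]).
    assert ((- t / s) * (- t / s) <= (1 - exp (- t / s)) * (1 - exp (- t / s))) by nra.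
    assert (s * ((- t / s) * (- t / s)) = t * t / s) by (field; lra).
    assert (t + s + t * t / s > 0).
    { replace (t + s + t * t / s) with ((t * t + t * s + s * s) / s) by (field; lra).
      apply Rdiv_lt_0_compat; [|lra]. pose proof (Rle_0_sqr (t + s / 2)). unfold Rsqr in *. nra. }
    nra.
Qed.

Lemma tau1'_ge1 s t : 0 < s -> 0 <= t -> 1 <= tau1' s t.
Proof.
  intros Hs Ht. unfold tau1'. pose proof (exp_neg_le1 t s Hs Ht). pose proof (exp_pos (- t / s)). nra.
Qed.

Lemma tau1_le s t : 0 < s -> 0 <= t -> tau1 s t <= t + 2 * s.
Proof.
  intros Hs Ht. unfold tau1. pose proof (exp_neg_le1 t s Hs Ht). pose proof (exp_pos (- t / s)).
  assert ((1 - exp (- t / s)) * (1 - exp (- t / s)) <= 1) by nra. nra.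
Qed.

Lemma tau2_pos s t : 0 < s -> 0 < tau2 s t.
Proof. intros Hs. unfold tau2. pose proof (exp_lb t s Hs).
  assert (s * (1 - t / s) = s - t) by (field; lra). nra. Qed.

Lemma tau2_ge s t : 0 < s -> t <= tau2 s t.
Proof. intros Hs. unfold tau2. pose proof (exp_pos (- t / s)). nra. Qed.

Lemma tau2_le s t : 0 < s -> 0 <= t -> tau2 s t <= t + s.
Proof. intros Hs Ht. unfold tau2. pose proof (exp_neg_le1 t s Hs Ht). nra. Qed.

Lemma tau2'_le1 s t : 0 < s -> tau2' s t <= 1.
Proof. intros Hs. unfold tau2'. pose proof (exp_pos (- t / s)). lra. Qed.

Lemma tau2_0 s : 0 < s -> tau2 s 0 = s.
Proof. intros Hs. unfold tau2. replace (- 0 / s) with 0 by (field; lra). rewrite exp_0. ring. Qed.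

Lemma u_exact u : visc_solution Fq 0 g0 u -> forall x t, 0 <= t -> u x t = - Rabs x - t / 2.
Proof.
  intros Hu x t Ht. apply Rle_antisym.
  - apply (upper_abs 0 u (Rle_refl 0) Hu x t Ht).
  - apply (le_by_lin _ _ (cc / 2)). pose proof cc_pos; lra.
    intros s Hs.
    pose proof (lower_HA 0 u (fun _ => s) (fun _ => 0) (Rle_refl 0) Hu
                  ltac:(intros; auto) ltac:(intros; apply isd_const)
                  ltac:(intros; apply exd_cont; auto_derive; auto)
                  ltac:(intros; lra) x t Ht) as H.
    simpl in H. pose proof (HH_le x s Hs). lra.
Qed.

Lemma ue_lower eps U : 0 < eps -> visc_solution Fq eps g0 U ->
  forall x t, 0 <= t -> - Rabs x - t / 2 - cc * sqrt (eps * t) <= U x t.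
Proof.
  intros He HU x t Ht.
  pose proof cc_pos.
  apply (le_by_sqrt _ _ (cc * cc * (2 * eps))). apply Rmult_lt_0_compat; nra.
  intros s Hs.
  destruct (A_tau eps (tau1 s) (tau1' s) He (fun t => tau1_pos s t Hs) (fun t => tau1_d s t Hs)
             (fun t => tau1'_c s t Hs)) as [Hp [Hd [Hc HAA]]].
  pose proof (lower_HA eps U _ _ (Rlt_le _ _ He) HU Hp Hd Hc) as HL.
  assert (HL2 : - HH x (2 * sqrt (eps * tau1 s t)) - t / 2 <= U x t).
  { apply (HL); auto. intros t' Ht'. rewrite HAA. pose proof (tau1'_ge1 s t' Hs (Rlt_le _ _ Ht')). nra. }
  pose proof (HH_le x _ (Hp t)).
  assert (Hsq : sqrt (eps * tau1 s t) <= sqrt (eps * t) + sqrt (2 * eps * s)).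
  { eapply Rle_trans; [|apply sqrt_add_le; nra].
    apply sqrt_le_1_alt. pose proof (tau1_le s t Hs Ht). nra. }
  assert (Hsq2 : sqrt (cc * cc * (2 * eps) * s) = cc * sqrt (2 * eps * s)).
  { replace (cc * cc * (2 * eps) * s) with ((cc * cc) * (2 * eps * s)) by ring.
    rewrite sqrt_mult by nra. rewrite sqrt_square by lra. auto. }
  rewrite Hsq2.
  assert (cc * sqrt (eps * tau1 s t) <= cc * (sqrt (eps * t) + sqrt (2 * eps * s))) by (apply Rmult_le_compat_l; lra).
  lra.
Qed.

Lemma ue_upper0 eps U : 0 < eps -> visc_solution Fq eps g0 U ->
  forall t, 0 <= t -> U 0 t <= - (cc * sqrt (eps * t)).
Proof.
  intros He HU t Ht.
  pose proof cc_pos.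
  apply (le_by_sqrt _ _ (cc * cc * eps)). apply Rmult_lt_0_compat; nra.
  intros s Hs.
  destruct (A_tau eps (tau2 s) (tau2' s) He (fun t => tau2_pos s t Hs) (fun t => tau2_d s t Hs)
             (fun t => tau2'_c s t Hs)) as [Hp [Hd [Hc HAA]]].
  pose proof (upper_HA eps U _ _ (Rlt_le _ _ He) HU Hp Hd Hc) as HL.
  assert (HL2 : U 0 t <= - HH 0 (2 * sqrt (eps * tau2 s t)) + cc * (2 * sqrt (eps * tau2 s 0)) / 2).
  { apply HL; auto.
    - intros t' Ht'. rewrite HAA. pose proof (tau2'_le1 s t' Hs). nra.
    - intros T HT. exists (2 * sqrt (eps * (T + s))). split. pose proof (sqrt_pos (eps * (T + s))); lra.
      intros t' Ht'. apply Rmult_le_compat_l; [lra|]. apply sqrt_le_1_alt.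
      pose proof (tau2_le s t' Hs (proj1 Ht')). nra. }
  rewrite HH_0 in HL2 by (pose proof (Hp t); lra).
  rewrite tau2_0 in HL2 by auto.
  assert (sqrt (eps * t) <= sqrt (eps * tau2 s t)).
  { apply sqrt_le_1_alt. pose proof (tau2_ge s t Hs). nra. }
  assert (Hsq2 : sqrt (cc * cc * eps * s) = cc * sqrt (eps * s)).
  { replace (cc * cc * eps * s) with ((cc * cc) * (eps * s)) by ring.
    rewrite sqrt_mult by nra. rewrite sqrt_square by lra. auto. }
  rewrite Hsq2.
  assert (cc * sqrt (eps * t) <= cc * sqrt (eps * tau2 s t)) by (apply Rmult_le_compat_l; lra).
  lra.
Qed.

Theorem proposition4p4 :
  forall (ue : R -> R -> R -> R) (u : R -> R -> R),
    (forall eps, 0 < eps -> visc_solution Fq eps g0 (ue eps)) ->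
    visc_solution Fq 0 g0 u ->
    (exists C, 0 < C /\
       forall eps T, 0 < eps < 1 -> 0 < T ->
         forall x t, 0 <= t <= T ->
           Rabs (ue eps x t - u x t) <= C * sqrt (T * eps)) /\
    (forall eps, 0 < eps < 1 ->
       filterlim (fun t => (ue eps 0 t - u 0 t) / sqrt (t * eps))
         (at_right 0) (locally (- (2 / sqrt PI)))).
Proof.
  intros ue u Hue Hu.
  pose proof cc_pos.
  split.
  - exists cc. split; auto.
    intros eps T He HT x t Ht.
    rewrite (u_exact u Hu x t (proj1 Ht)).
    pose proof (upper_abs eps (ue eps) (Rlt_le _ _ (proj1 He)) (Hue eps (proj1 He)) x t (proj1 Ht)).
    pose proof (ue_lower eps (ue eps) (proj1 He) (Hue eps (proj1 He)) x t (proj1 Ht)).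
    assert (sqrt (eps * t) <= sqrt (T * eps)) by (apply sqrt_le_1_alt; nra).
    assert (cc * sqrt (eps * t) <= cc * sqrt (T * eps)) by (apply Rmult_le_compat_l; lra).
    apply Rabs_le. lra.
  - intros eps He.
    apply filterlim_locally. intros e.
    exists (mkposreal (4 * e * e * eps) ltac:(pose proof (cond_pos e); destruct He; apply Rmult_lt_0_compat; nra)).
    intros t Hb Htp. change R in t. simpl in Hb.
    unfold ball in Hb; simpl in Hb; unfold AbsRing_ball, abs, minus, plus, opp in Hb; simpl in Hb.
    replace (t + - 0) with t in Hb by ring. rewrite Rabs_pos_eq in Hb by lra.
    unfold ball; simpl; unfold AbsRing_ball, abs, minus, plus, opp; simpl.
    rewrite (u_exact u Hu 0 t (Rlt_le _ _ Htp)). rewrite Rabs_R0.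
    pose proof (ue_upper0 eps (ue eps) (proj1 He) (Hue eps (proj1 He)) t (Rlt_le _ _ Htp)) as Hup.
    pose proof (ue_lower eps (ue eps) (proj1 He) (Hue eps (proj1 He)) 0 t (Rlt_le _ _ Htp)) as Hlo.
    rewrite Rabs_R0 in Hlo.
    replace (eps * t) with (t * eps) in * by ring.
    set (q := sqrt (t * eps)) in *.
    assert (Hq : 0 < q) by (apply sqrt_lt_R0; destruct He; nra).
    assert (Hqq : q * q = t * eps) by (apply sqrt_sqrt; destruct He; nra).
    pose proof (cond_pos e) as He'.
    assert (Ht2 : t < 2 * e * q).
    { destruct (Rle_or_lt (2 * e * q) t) as [Hc|]; auto. exfalso.
      assert (H00 : 0 <= 2 * e * q) by nra.
      assert (H0 : 4 * e * e * (q * q) <= t * t).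
      { replace (4 * e * e * (q * q)) with ((2 * e * q) * (2 * e * q)) by ring.
        apply Rmult_le_compat; lra. }
      rewrite Hqq in H0. destruct He.
      assert (4 * e * e * eps <= t) by (apply (Rmult_le_reg_r t); nra).
      lra. }
    fold cc.
    set (r := (ue eps 0 t - (- 0 - t / 2)) / q).
    assert (Hr1 : - cc <= r).
    { unfold r. apply (Rmult_le_reg_r q); auto. field_simplify; [|lra]. lra. }
    assert (Hr2 : r <= - cc + t / (2 * q)).
    { unfold r. apply (Rmult_le_reg_r q); auto. field_simplify; [|lra|lra]. lra. }
    assert (t / (2 * q) < e).
    { apply (Rmult_lt_reg_r (2 * q)); [lra|]. field_simplify; lra. }
    rewrite Rabs_pos_eq; lra.
Qed.
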